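(* Let $q$ be a prime power and $h\geq 2$ an integer. Then for each $t\in\{2,3\}$ there exists a $t$-fold blocking set of size $t(q^h+q^{h-1}+1)$ in $\mathrm{PG}(2,q^h)$.
   Context: $\mathrm{PG}(2,q^h)$ denotes the Desarguesian projective plane over $\mathbb{F}_{q^h}$. A $t$-fold blocking set is a set of points meeting every line in at least $t$ points. *)

(* Defs.v *)
(* PG(2,F) over a finite field F: points / lines are the
   1- / 2-dimensional subspaces of F^3, represented canonically (via the
   mxalgebra closure <<_>>) by 3x3 matrices whose row space is the subspace. *)
From mathcomp Require Import all_boot all_algebra all_field.
Set Implicit Arguments. Unset Strict Implicit. Unset Printing Implicit Defensive.

Definition prime_power (q : nat) : Prop :=
  exists p k : nat, prime p /\ (0 < k)%N /\ q = (p ^ k)%N.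

Definition pg_point (F : finFieldType) (P : 'M[F]_3) : bool :=
  (\rank P == 1%N) && (<<P>>%MS == P).

Definition pg_line (F : finFieldType) (L : 'M[F]_3) : bool :=
  (\rank L == 2%N) && (<<L>>%MS == L).

Definition pg_incident (F : finFieldType) (P L : 'M[F]_3) : bool := (P <= L)%MS.

Definition t_fold_blocking_set (F : finFieldType) (t : nat) (B : {set 'M[F]_3}) : Prop :=
  (forall P, P \in B -> pg_point P) /\
  (forall L, pg_line L -> (t <= #|[set P in B | pg_incident P L]|)%N).

(* Main.v *)
Require Import Defs.
From mathcomp Require Import all_boot all_algebra all_field.
From mathcomp Require Import ring lra zify.
Set Implicit Arguments. Unset Strict Implicit. Unset Printing Implicit Defensive.
Import GRing.Theory.
Local Open Scope ring_scope.

Section FieldFacts.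
Variables (F : finFieldType) (q h : nat).
Hypotheses (hq : (1 < q)%N) (hpq : [pchar F].-nat q) (hF : #|F| = (q ^ h)%N) (hh : (1 < h)%N).

Definition Kp (x : F) := x ^+ q == x.
Definition Tr (x : F) := \sum_(i < h) x ^+ (q ^ i)%N.

Lemma pnat_qi i : [pchar F].-nat (q ^ i)%N.
Proof. by rewrite pnatX hpq. Qed.

Lemma expqD i (x y : F) : (x + y) ^+ (q ^ i)%N = x ^+ (q ^ i)%N + y ^+ (q ^ i)%N.
Proof. exact: exprDn_pchar (pnat_qi i). Qed.

Lemma expqN i (x : F) : (- x) ^+ (q ^ i)%N = - x ^+ (q ^ i)%N.
Proof. exact: exprNn_pchar (pnat_qi i). Qed.

Lemma expq_sum i n (a : 'I_n -> F) :
  (\sum_(j < n) a j) ^+ (q ^ i)%N = \sum_(j < n) (a j) ^+ (q ^ i)%N.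
Proof.
elim: n a => [|n IH] a; first by rewrite !big_ord0 expr0n expn_eq0 (gtn_eqF (ltnW hq)).
by rewrite !big_ord_recr /= expqD IH.
Qed.

Lemma TrD x y : Tr (x + y) = Tr x + Tr y.
Proof. by rewrite /Tr -big_split /=; apply: eq_bigr => i _; rewrite expqD. Qed.

Lemma TrN x : Tr (- x) = - Tr x.
Proof. by rewrite /Tr -sumrN; apply: eq_bigr => i _; rewrite expqN. Qed.

Lemma TrB x y : Tr (x - y) = Tr x - Tr y.
Proof. by rewrite TrD TrN. Qed.

Lemma Tr0 : Tr 0 = 0.
Proof. by rewrite /Tr big1 // => i _; rewrite expr0n expn_eq0 (gtn_eqF (ltnW hq)). Qed.

Lemma KpX i k : Kp k -> k ^+ (q ^ i)%N = k.
Proof.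
rewrite /Kp => /eqP kq; elim: i => [|i IH]; first by rewrite expn0 expr1.
by rewrite expnSr exprM IH kq.
Qed.

Lemma TrZ k x : Kp k -> Tr (k * x) = k * Tr x.
Proof.
move=> Kk; rewrite /Tr mulr_sumr; apply: eq_bigr => i _.
by rewrite exprMn (KpX _ Kk).
Qed.

Lemma Kp_Tr x : Kp (Tr x).
Proof.
apply/eqP; rewrite -[q in _ ^+ q]expn1 expq_sum /=.
rewrite (eq_bigr (fun j : 'I_h => x ^+ (q ^ j.+1)%N)); last first.
  by move=> j _; rewrite -exprM -expnSr.
have xe : x ^+ (q ^ h)%N = x by rewrite -hF expf_card.
move: xe; rewrite /Tr; case: h hh => // h' _ xe.
rewrite big_ord_recr big_ord_recl /= expn0 expr1 xe.
by rewrite addrC; congr (_ + _); apply: eq_bigr.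
Qed.

Lemma Kp0 : Kp 0. Proof. by rewrite /Kp expr0n (gtn_eqF (ltnW hq)). Qed.
Lemma Kp1 : Kp 1. Proof. by rewrite /Kp expr1n. Qed.
Lemma KpD a b : Kp a -> Kp b -> Kp (a + b).
Proof. by rewrite /Kp -[q]expn1 expqD => /eqP-> /eqP->. Qed.
Lemma KpN a : Kp a -> Kp (- a).
Proof. by rewrite /Kp -[q]expn1 expqN => /eqP->. Qed.
Lemma KpB a b : Kp a -> Kp b -> Kp (a - b).
Proof. by move=> ha hb; apply: KpD => //; apply: KpN. Qed.
Lemma KpM a b : Kp a -> Kp b -> Kp (a * b).
Proof. by rewrite /Kp exprMn => /eqP-> /eqP->. Qed.
Lemma KpV a : Kp a -> Kp (a^-1).
Proof. by rewrite /Kp exprVn => /eqP->. Qed.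

End FieldFacts.

Section Roots.
Variables (F : finFieldType) (q h : nat).
Hypotheses (hq : (1 < q)%N) (hpq : [pchar F].-nat q) (hF : #|F| = (q ^ h)%N) (hh : (1 < h)%N).

Lemma card_roots_lt (p : {poly F}) : p != 0 -> (#|[pred x | root p x]| < size p)%N.
Proof.
move=> p0; rewrite cardE; apply: max_poly_roots p0 _ _; last exact: enum_uniq.
by apply/allP => x; rewrite mem_enum.
Qed.

Lemma cardK_le : (#|[pred x : F | Kp q x]| <= q)%N.
Proof.
have sz : size ('X^q - 'X : {poly F}) = q.+1.
  by rewrite size_addl ?size_polyXn // size_opp size_polyX ltnS.
have nz : ('X^q - 'X : {poly F}) != 0 by rewrite -size_poly_eq0 sz.
have := card_roots_lt nz; rewrite sz ltnS; apply: leq_trans.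
apply: subset_leq_card; apply/subsetP => x; rewrite !inE /Kp /root.
by rewrite !hornerE subr_eq0.
Qed.

Lemma Tr_fiber (g c : F) : g != 0 -> (#|[pred x | Tr q h (g * x)%R == c]| <= q ^ h.-1)%N.
Proof.
move=> g0.
set P : {poly F} := \sum_(i < h) (g ^+ (q ^ i)%N) *: 'X^(q ^ i) - c%:P.
have hornP x : P.[x] = Tr q h (g * x) - c.
  rewrite /P hornerD hornerN hornerC horner_sum /Tr; congr (_ - _).
  by apply: eq_bigr => i _; rewrite hornerZ hornerXn exprMn.
have qpos : (0 < q)%N by apply: ltnW.
have coefP j : P`_j = \sum_(i < h) g ^+ (q ^ i)%N * (j == q ^ i)%N%:R - (j == 0)%N%:R * c.
  rewrite /P coefB coef_sum coefC; congr (_ - _).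
    by apply: eq_bigr => i _; rewrite coefZ coefXn.
  by case: (j == 0)%N; rewrite ?mul1r ?mul0r.
have szP : (size P <= (q ^ h.-1).+1)%N.
  apply/leq_sizeP => j hj; rewrite coefP.
  have -> : (j == 0)%N = false by apply/negbTE; rewrite -lt0n; apply: leq_trans hj.
  rewrite mul0r subr0 big1 // => i _.
  have -> : (j == q ^ i)%N = false.
    apply/negbTE; rewrite neq_ltn; apply/orP; right.
    apply: leq_trans hj; rewrite ltnS leq_exp2l //.
    by case: h hh i => // h'' _ [i /= hi]; rewrite -ltnS.
  by rewrite mulr0.
have P0 : P != 0.
  apply/eqP => /(congr1 (fun p : {poly F} => p`_(q ^ h.-1)%N)); rewrite coefP coef0.
  have -> : (q ^ h.-1 == 0)%N = false by rewrite expn_eq0 (gtn_eqF qpos).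
  rewrite mul0r subr0.
  have hm : (h.-1 < h)%N by case: h hh.
  rewrite (bigD1 (Ordinal hm)) //= eqxx mulr1 big1 ?addr0.
    by apply/eqP; rewrite expf_eq0 (negbTE g0) andbF.
  move=> i ne; rewrite eqn_exp2l //.
  have -> : (h.-1 == i)%N = false.
    by apply/negbTE; apply: contra ne => /eqP e; apply/eqP; apply: val_inj; rewrite /= e.
  by rewrite mulr0.
have := card_roots_lt P0; move=> /leq_trans /(_ szP); rewrite ltnS; apply: leq_trans.
apply: subset_leq_card; apply/subsetP => x; rewrite !inE /root hornP.
by rewrite subr_eq0.
Qed.

End Roots.

Lemma card_has_le (T : finType) (U : eqType) (s : seq U) (P : U -> pred T) (m : nat) :
  (forall k, k \in s -> #|P k| <= m)%N ->
  (#|[pred x | has (fun k => P k x) s]| <= size s * m)%N.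
Proof.
elim: s => [|k s IH] hP.
  by rewrite /= mul0n leqn0; apply/eqP; apply: eq_card0 => x; rewrite inE.
have e : #|[pred x | has (fun k0 => P k0 x) (k :: s)]| =
         #|[predU P k & [pred x | has (fun k => P k x) s]]|.
  by apply: eq_card => x; rewrite !inE.
rewrite e; have cu := cardUI (P k) [pred x | has (fun k => P k x) s].
have h1 := hP k (mem_head _ _).
have h2 : (#|[pred x | has (fun k => P k x) s]| <= size s * m)%N.
  by apply: IH => k' hk'; apply: hP; rewrite in_cons hk' orbT.
apply: leq_trans (_ : (_ <= #|P k| + #|[pred x | has (fun k => P k x) s]|)%N) _.
  by rewrite -cu leq_addr.
by rewrite /= mulSn leq_add.
Qed.

Section Exist.
Variables (F : finFieldType) (q h : nat).
Hypotheses (hq : (1 < q)%N) (hpq : [pchar F].-nat q) (hF : #|F| = (q ^ h)%N) (hh : (1 < h)%N).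

Local Notation Tr := (Tr q h).
Local Notation Kp := (Kp q).

Lemma qh_big : (q < q ^ h)%N.
Proof.
case: h hh => // [[|h']] // _; rewrite -[X in (X < _)%N]expn1 ltn_exp2l //.
Qed.

Lemma exists_ker : exists phi : F, phi != 0 /\ Tr phi = 0.
Proof.
case: (boolP [exists phi : F, (phi != 0) && (Tr phi == 0)]).
  by case/existsP => phi /andP [p1 /eqP p2]; exists phi.
move=> /existsPn hn; exfalso.
have inj : injective (Tr : F -> F).
  move=> x y e; apply/eqP; rewrite -subr_eq0; apply/negPn/negP => nz.
  by have := hn (x - y); rewrite nz (TrB _ hpq) e subrr eqxx.
have : (#|F| <= #|[pred x : F | Kp x]|)%N.
  have ci : #|[set (Tr : F -> F) x | x in [set: F]]| = #|F| by rewrite card_imset // cardsT.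
  rewrite -ci; apply: subset_leq_card; apply/subsetP => y /imsetP [x _ ->]; rewrite inE.
  exact: Kp_Tr.
rewrite hF => /leq_trans /(_ (cardK_le F hq)).
by rewrite leqNgt qh_big.
Qed.

Lemma exists_omega (phi : F) : phi != 0 ->
  exists om : F, Tr (phi * om) != 0 /\ Tr (phi * om^-1) != 0.
Proof.
move=> p0.
case: (boolP [exists om : F, (Tr (phi * om) != 0) && (Tr (phi * om^-1) != 0)]).
  by case/existsP => om /andP [a b]; exists om.
move=> /existsPn hn; exfalso.
set B1 := [pred om : F | Tr (phi * om) == 0].
set B2 := [pred om : F | (om != 0) && (Tr (phi * om^-1) == 0)].
have c1 : (#|B1| <= q ^ h.-1)%N by apply: Tr_fiber.
have c2 : (#|B2| + 1 <= q ^ h.-1)%N.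
  have e : #|B2| = #|[predD1 B1 & 0]|.
    have := card_image (can_inj (@invrK F)) [predD1 B1 & 0].
    move=> <-; apply: eq_card => x.
    rewrite -[in RHS](invrK x) (mem_image (can_inj (@invrK F))) /B1 /B2.
    rewrite in_simpl. rewrite [in RHS]in_simpl. rewrite [in RHS]in_simpl.
    by rewrite invr_eq0.
  have := cardD1 0 B1; rewrite inE mulr0 (Tr0 F h hq) eqxx /= => e2.
  by rewrite e addn1 -add1n -e2.
have : (#|F| <= #|[predU B1 & B2]|)%N.
  apply: subset_leq_card; apply/subsetP => om _.
  rewrite inE; apply/orP.
  have := hn om; rewrite negb_and !negbK => /orP [h1|h2]; first by left.
  case: (eqVneq om 0) => [e0|nz].
    by left; rewrite /B1 in_simpl e0 mulr0 (Tr0 F h hq) eqxx.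
  by right; rewrite /B2 in_simpl h2 nz.
have cu := cardUI B1 B2.
rewrite hF => hle.
have hU : (#|[predU B1 & B2]| <= #|B1| + #|B2|)%N by rewrite -cu leq_addr.
have hle2 := leq_trans hle hU.
have : (q ^ h <= 2 * q ^ h.-1 - 1)%N by lia.
have : (2 * q ^ h.-1 <= q ^ h)%N.
  by case: h hh => // h' _; rewrite /= expnS leq_mul2r hq orbT.
have : (0 < q ^ h.-1)%N by rewrite expn_gt0 ltnW.
lia.
Qed.

Lemma exists_alpha (om tau u : F) : ~~ Kp om -> tau != 0 ->
  exists al : F, al != 0 /\
    forall k, Kp k -> k != 0 -> Tr (al / (k - om)) != (k - u) / (k * tau).
Proof.
move=> Kom t0.
set s := enum [pred k : F | Kp k && (k != 0)].
set P := fun k : F => [pred al : F | Tr (al / (k - om)) == (k - u) / (k * tau)].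
have hs : (size s <= q.-1)%N.
  rewrite /s -cardE.
  have := cardD1 0 [pred x : F | Kp x]; rewrite inE (Kp0 F hq) /= => e.
  have := cardK_le F hq; rewrite e add1n => /=.
  move=> hle; rewrite -ltnS (ltn_predK hq); apply: leq_trans hle; rewrite ltnS.
  by apply: subset_leq_card; apply/subsetP => x; rewrite !inE andbC.
have hP : forall k, k \in s -> (#|P k| <= q ^ h.-1)%N.
  move=> k; rewrite mem_enum inE => /andP [Kk _].
  have nz : (k - om)^-1 != 0.
    rewrite invr_eq0 subr_eq0; apply: contra Kom => /eqP <-; exact: Kk.
  have := Tr_fiber hq hh ((k - u) / (k * tau)) nz.
  by apply: leq_trans; apply: subset_leq_card; apply/subsetP => x; rewrite !inE mulrC.
have cs := card_has_le hP.
case: (boolP [exists al : F, (al != 0) && ~~ has (fun k => P k al) s]).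
  case/existsP => al /andP [a0 hn]; exists al; split => // k Kk k0.
  apply: contra hn => e; apply/hasP; exists k; first by rewrite mem_enum inE Kk k0.
  by rewrite inE.
move=> /existsPn hn; exfalso.
have : (#|F| <= 1 + #|[pred x | has (fun k => P k x) s]|)%N.
  have := cardD1 0 F.
  move=> ->; rewrite inE leq_add2l.
  apply: subset_leq_card; apply/subsetP => al; rewrite !inE andbT => a0.
  by have := hn al; rewrite a0 /= negbK.
rewrite hF => hle.
have h3 : (size s * q ^ h.-1 <= q.-1 * q ^ h.-1)%N by rewrite leq_mul2r hs orbT.
have h4 : (q ^ h = q.-1 * q ^ h.-1 + q ^ h.-1)%N.
  by rewrite addnC -mulSn (ltn_predK hq); case: h hh => // h' _; rewrite expnS.
have h5 : (1 < q ^ h.-1)%N.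
  by case: h hh => // [[|h']] // _; rewrite /= -[X in (X < _)%N](expn0 q) ltn_exp2l.
have h6 := leq_trans hle (leq_add (leqnn 1) (leq_trans cs h3)).
move: h6; rewrite h4.
set a := (q.-1 * q ^ h.-1)%N; set b := (q ^ h.-1)%N.
lia.
Qed.

End Exist.

Section Core.
Variables (F : finFieldType) (q h : nat).
Hypotheses (hq : (1 < q)%N) (hpq : [pchar F].-nat q) (hF : #|F| = (q ^ h)%N) (hh : (1 < h)%N).
Variables (th om al : F).
Local Notation Tr := (Tr q h).
Local Notation Kp := (Kp q).
Hypotheses (al0 : al != 0) (Kom : ~~ Kp om) (tau0 : Tr th != 0)
  (s0 : Tr (th * om) = 0) (u0 : Tr (th * om * om) != 0)
  (halpha : forall k, Kp k -> k != 0 ->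
     Tr (al / (k - om)) != (k - Tr (th * om * om)) / (k * Tr th)).

Let r := th / al.

Lemma th0 : th != 0.
Proof. by apply: contra tau0 => /eqP ->; rewrite (Tr0 F h hq). Qed.

Lemma KpT (x : F) : Kp (Tr x).
Proof. exact: Kp_Tr hq hpq hF hh x. Qed.

Lemma TrZ' (k x : F) : Kp k -> Tr (k * x) = k * Tr x.
Proof. exact: TrZ. Qed.

Lemma TrD' (x y : F) : Tr (x + y) = Tr x + Tr y.
Proof. exact: TrD. Qed.

Lemma TrB' (x y : F) : Tr (x - y) = Tr x - Tr y.
Proof. exact: TrB. Qed.

Lemma Kp_om_ne (k : F) : Kp k -> k - om != 0.
Proof. by move=> Kk; rewrite subr_eq0; apply: contra Kom => /eqP <-. Qed.

Lemma core (x c x' d lam : F) : Kp c -> Kp d -> (x != 0) || (c != 0) ->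
  (x' != 0) || (d != 0) ->
  Tr (th * x') - om * d = lam * x ->
  d + om * r * x' = lam * Tr (th * x) ->
  r * x' = lam * c -> False.
Proof.
move=> Kc Kd nz1 nz2 E1 E2 E3.
have r0 : r != 0 by rewrite /r mulf_neq0 ?invr_eq0 ?th0.
set m := Tr (th * x) in E2 *.
have Km : Kp m := KpT _.
have Ka := KpT (th * x').
case: (eqVneq c 0) => [c0|c0].
  have x'0 : x' = 0.
    by move: E3; rewrite c0 mulr0 => /eqP; rewrite mulf_eq0 (negbTE r0) /= => /eqP.
  move: E1 E2; rewrite x'0 mulr0 (Tr0 F h hq) mulr0 addr0 sub0r => E1 E2.
  have d0 : d != 0 by move: nz2; rewrite x'0 eqxx.
  have x0 : x != 0 by move: nz1; rewrite c0 eqxx orbF.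
  have lam0 : lam != 0 by apply: contra d0 => /eqP l0; rewrite E2 l0 mul0r.
  have m0 : m != 0 by apply: contra d0 => /eqP m0; rewrite E2 m0 mulr0.
  have ex : x = - om * m.
    have : lam * x = lam * (- om * m) by rewrite -E1 E2; ring.
    by move/(mulfI lam0).
  have : m = - m * Tr (th * om).
    rewrite {1}/m ex.
    have -> : th * (- om * m) = (- m) * (th * om) by ring.
    by rewrite (@TrZ' (- m) (th * om)) //; apply: KpN.
  rewrite s0 mulr0 => /eqP; by rewrite (negbTE m0).
have lam0 : lam != 0.
  apply/negP => /eqP l0; move: E3; rewrite l0 mul0r => /eqP.
  rewrite mulf_eq0 (negbTE r0) /= => /eqP x'0.
  move: E2; rewrite x'0 mulr0 addr0 l0 mul0r => d0.
  by move: nz2; rewrite x'0 d0 eqxx.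
have mc : m - om * c != 0.
  rewrite subr_eq0; apply: contra Kom => /eqP e.
  have -> : om = m / c by rewrite e; field.
  by apply: KpM => //; apply: KpV.
have hd : d = lam * (m - om * c).
  have : d = lam * m - om * (r * x') by rewrite -E2; ring.
  by rewrite E3 => ->; ring.
have d0 : d != 0 by rewrite hd mulf_neq0.
set k := m / c.
have Kk : Kp k by apply: KpM => //; apply: KpV.
have ko : k - om != 0 := Kp_om_ne Kk.
have ha : Tr (th * x') = d * Tr (al / (k - om)).
  have hx' : x' = lam * c / r by rewrite -E3; field.
  have hlam : lam = d / (m - om * c) by rewrite hd; field.
  rewrite -TrZ' //; congr (Tr _).
  rewrite hx' hlam /r /k; field.
  by rewrite c0 mulNr mc al0 th0.
set a := Tr (th * x').
have hx : x = (a - om * d) * (m - om * c) / d.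
  have hlam : lam = d / (m - om * c) by rewrite hd; field.
  have : lam * x = a - om * d by rewrite -E1.
  rewrite hlam => e; rewrite -e; field.
  by rewrite mc d0.
have hm : m = a * m / d * Tr th + c * Tr (th * om * om).
  rewrite {1}/m hx.
  have -> : th * ((a - om * d) * (m - om * c) / d) =
     (a * m / d) * th - (a * c / d) * (th * om) - m * (th * om) + c * (th * om * om).
    by field.
  have Kamd : Kp (a * m / d) by apply: KpM; [apply: KpM|apply: KpV].
  have Kacd : Kp (a * c / d) by apply: KpM; [apply: KpM|apply: KpV].
  rewrite TrD' !TrB' (@TrZ' (a * m / d) th) // (@TrZ' (a * c / d) (th * om)) //.
  rewrite (@TrZ' m (th * om)) // (@TrZ' c (th * om * om)) // s0; ring.
case: (eqVneq m 0) => [m0|m0].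
  move: hm; rewrite m0 !(mulr0, mul0r) add0r => /esym /eqP.
  by rewrite mulf_eq0 (negbTE c0) (negbTE u0).
have k0 : k != 0 by rewrite /k mulf_neq0 ?invr_eq0.
have := halpha Kk k0; apply/negP; rewrite negbK.
move: hm; rewrite /a ha => hm.
apply/eqP.
have hmk : m = k * c by rewrite /k; field.
move: hm; rewrite hmk => hm.
have e2 : k = Tr (al / (k - om)) * k * Tr th + Tr (th * om * om).
  apply: (mulIf c0); rewrite {1}hm; field.
  by rewrite d0.
set T := Tr (al / (k - om)) in e2 *.
have e3 : k - Tr (th * om * om) = T * (k * Tr th) by rewrite {1}e2; ring.
rewrite e3; field.
by rewrite k0 tau0.
Qed.

End Core.

Section Geom.
Variable (F : finFieldType).

Definition i0 : 'I_3 := @Ordinal 3 0 isT.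
Definition i1 : 'I_3 := @Ordinal 3 1 isT.
Definition i2 : 'I_3 := @Ordinal 3 2 isT.

Definition vec3 (a b c : F) : 'rV[F]_3 := \row_(j < 3) nth 0 [:: a; b; c] j.

Lemma vec3E0 a b c : vec3 a b c 0 i0 = a. Proof. by rewrite mxE. Qed.
Lemma vec3E1 a b c : vec3 a b c 0 i1 = b. Proof. by rewrite mxE. Qed.
Lemma vec3E2 a b c : vec3 a b c 0 i2 = c. Proof. by rewrite mxE. Qed.

Lemma vec3_inj a b c a' b' c' : vec3 a b c = vec3 a' b' c' -> [/\ a = a', b = b' & c = c'].
Proof.
move=> e; split.
- by have := congr1 (fun v : 'rV_3 => v 0 i0) e; rewrite !vec3E0.
- by have := congr1 (fun v : 'rV_3 => v 0 i1) e; rewrite !vec3E1.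
- by have := congr1 (fun v : 'rV_3 => v 0 i2) e; rewrite !vec3E2.
Qed.

Lemma vec3_eta (v : 'rV[F]_3) : v = vec3 (v 0 i0) (v 0 i1) (v 0 i2).
Proof. by apply/rowP => -[[|[|[|j]]] hj] //; rewrite mxE /=; congr (v _ _); apply: val_inj. Qed.

Lemma vec3Z l a b c : l *: vec3 a b c = vec3 (l * a) (l * b) (l * c).
Proof. by apply/rowP => -[[|[|[|j]]] hj]; rewrite !mxE. Qed.

Lemma vec3B a b c a' b' c' : vec3 a b c - vec3 a' b' c' = vec3 (a - a') (b - b') (c - c').
Proof. by apply/rowP => -[[|[|[|j]]] hj]; rewrite !mxE //= subrr. Qed.

Lemma vec3_eq0 a b c : (vec3 a b c == 0) = [&& a == 0, b == 0 & c == 0].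
Proof.
apply/eqP/and3P => [e|[/eqP-> /eqP-> /eqP->]].
  have e' : vec3 a b c = vec3 0 0 0.
    by rewrite e; apply/rowP => -[[|[|[|j]]] hj]; rewrite !mxE.
  by case: (vec3_inj e') => -> -> ->.
by apply/rowP => -[[|[|[|j]]] hj]; rewrite !mxE.
Qed.

Definition pt (v : 'rV[F]_3) : 'M[F]_3 := <<v>>%MS.

Lemma ptP (v w : 'rV[F]_3) : pt v = pt w -> exists l, v = l *: w.
Proof.
move=> e; apply/sub_rVP.
have : (v <= pt v)%MS by rewrite /pt genmxE submx_refl.
by rewrite e /pt genmxE.
Qed.

Lemma pt_point (v : 'rV[F]_3) : v != 0 -> pg_point (pt v).
Proof.
move=> v0; rewrite /pg_point /pt genmx_id eqxx andbT genmxE rank_rV v0.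
done.
Qed.

Lemma pt_inc (v : 'rV[F]_3) (L : 'M[F]_3) : pg_incident (pt v) L = (v <= L)%MS.
Proof. by rewrite /pg_incident /pt genmxE. Qed.

Lemma pt_scale (l : F) (v : 'rV[F]_3) : l != 0 -> pt (l *: v) = pt v.
Proof. by move=> l0; rewrite /pt; apply: eq_genmx; apply: eqmx_scale. Qed.

Lemma ptM (v : 'rV[F]_3) (M : 'M[F]_3) : <<pt v *m M>>%MS = pt (v *m M).
Proof. by rewrite /pt; apply: eq_genmx; apply: eqmxMr; apply: genmxE. Qed.

End Geom.

Section Constr.
Variables (F : finFieldType) (q h : nat).
Hypotheses (hq : (1 < q)%N) (hpq : [pchar F].-nat q) (hF : #|F| = (q ^ h)%N) (hh : (1 < h)%N).
Variables (th om al : F).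
Local Notation Tr := (Tr q h).
Local Notation Kp := (Kp q).
Hypotheses (al0 : al != 0) (Kom : ~~ Kp om) (tau0 : Tr th != 0)
  (s0 : Tr (th * om) = 0) (u0 : Tr (th * om * om) != 0)
  (halpha : forall k, Kp k -> k != 0 ->
     Tr (al / (k - om)) != (k - Tr (th * om * om)) / (k * Tr th)).

Let r := th / al.

Definition uvec (p : F * F) : 'rV[F]_3 := vec3 p.1 (Tr (th * p.1)) p.2.
Definition Dset : {set F * F} := [set p : F * F | Kp p.2 && (p != (0, 0))].

Definition Mpsi : 'M[F]_3 :=
  \matrix_(i < 3, j < 3) nth 0 (nth [::] [:: [:: 0; om * r; r]; [:: 1; 0; 0]; [:: - om; 1; 0]] i) j.

Lemma mulM (a b c : F) : vec3 a b c *m Mpsi = vec3 (b - om * c) (c + om * r * a) (r * a).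
Proof.
apply/rowP => j; rewrite !mxE !big_ord_recl big_ord0 !mxE /=.
by case: j => -[|[|[|j]]] hj //=; ring.
Qed.

Lemma r0 : r != 0.
Proof.
rewrite /r mulf_neq0 ?invr_eq0 //.
by apply: contra tau0 => /eqP ->; rewrite (Tr0 F h hq).
Qed.

Lemma mulM3 (v : 'rV[F]_3) : v *m Mpsi *m Mpsi *m Mpsi = r *: v.
Proof.
rewrite [v]vec3_eta !mulM vec3Z; congr vec3; ring.
Qed.

Lemma Mpsi3 : Mpsi *m Mpsi *m Mpsi = r%:M.
Proof.
apply/row_matrixP => i; rewrite !rowE !mulmxA mulM3.
by rewrite mul_mx_scalar.
Qed.

Lemma Mpsi_unit : Mpsi \in unitmx.
Proof.
have e : Mpsi *m (r^-1 *: (Mpsi *m Mpsi)) = 1%:M.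
  by rewrite -scalemxAr mulmxA Mpsi3 scale_scalar_mx mulVf ?r0.
by case: (mulmx1_unit e).
Qed.

Lemma uvec_neq0 p : p \in Dset -> uvec p != 0.
Proof.
rewrite inE => /andP [_ nz]; rewrite /uvec vec3_eq0.
apply: contra nz => /and3P [/eqP e1 _ /eqP e3].
by case: p e1 e3 => a b /= -> ->.
Qed.

Lemma uvecM_neq0 p (N : 'M[F]_3) : N \in unitmx -> p \in Dset -> uvec p *m N != 0.
Proof.
move=> Nu pD; apply: contra (uvec_neq0 pD) => /eqP e.
by rewrite -(mulmxK Nu (uvec p)) e mul0mx.
Qed.

Lemma core_pt p p' : p \in Dset -> p' \in Dset -> pt (uvec p) != pt (uvec p' *m Mpsi).
Proof.
move=> pD p'D; apply/eqP => /esym /ptP [l e].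
move: pD p'D e; rewrite !inE /uvec mulM vec3Z.
case: p => x c; case: p' => x' d /= /andP [Kc nz1] /andP [Kd nz2] /vec3_inj [E1 E2 E3].
have nz1' : (x != 0) || (c != 0).
  by apply: contraR nz1; rewrite negb_or !negbK => /andP [/eqP -> /eqP ->].
have nz2' : (x' != 0) || (d != 0).
  by apply: contraR nz2; rewrite negb_or !negbK => /andP [/eqP -> /eqP ->].
by apply: (core hq hpq hF hh al0 Kom tau0 s0 u0 halpha Kc Kd nz1' nz2' E1 E2 E3).
Qed.

End Constr.

Section Block.
Variables (F : finFieldType) (q h : nat).
Hypotheses (hq : (1 < q)%N) (hpq : [pchar F].-nat q) (hF : #|F| = (q ^ h)%N) (hh : (1 < h)%N).
Variable (th : F).
Local Notation Tr := (Tr q h).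
Local Notation Kp := (Kp q).
Local Notation uvec := (uvec q h th).
Local Notation Dset := (Dset F q).

Lemma block (N L : 'M[F]_3) : N \in unitmx -> pg_line L ->
  exists2 p, p \in Dset & (uvec p *m N <= L)%MS.
Proof.
move=> Nu /andP [/eqP rL _].
set C := cokermx L.
have rC : \rank C = 1%N by rewrite mxrank_coker rL.
pose g := fun p => uvec p *m N *m col_base C.
set D0 := [set p : F * F | Kp p.2].
have cD0 : (2 * #|F| <= #|D0|)%N.
  have -> : D0 = setX [set: F] [set c | Kp c] by apply/setP => -[a b]; rewrite !inE.
  rewrite cardsX cardsT mulnC leq_mul2l; apply/orP; right.
  have : [set (0:F); 1] \subset [set c | Kp c].
    apply/subsetP => x; rewrite !inE => /orP [/eqP->|/eqP->]; [exact: Kp0|exact: Kp1].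
  by move/subset_leq_card; rewrite cards2 eq_sym oner_eq0.
have : ~~ [forall p1, forall p2, (p1 \in D0) ==> (p2 \in D0) ==> (g p1 == g p2) ==> (p1 == p2)].
  apply/negP => /forallP inj.
  have ginj : {in D0 &, injective g}.
    move=> p1 p2 h1 h2 e; apply/eqP.
    by have := inj p1; move/forallP/(_ p2); rewrite h1 h2 e eqxx.
  have ci := card_in_imset ginj.
  have : (#|[set g x | x in D0]| <= #|F|)%N.
    apply: leq_trans (max_card _) _; rewrite card_mx rC.
    by rewrite mul1n expn1.
  rewrite ci => hle.
  have : (0 < #|F|)%N by apply/card_gt0P; exists 0.
  lia.
rewrite negb_forall => /existsP [p1]; rewrite negb_forall => /existsP [p2].
rewrite !negb_imply => /and4P [h1 h2 e ne].
move: h1 h2; rewrite !inE => h1 h2.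
exists (p1.1 - p2.1, p1.2 - p2.2).
  rewrite inE /= (KpB hpq h1 h2) /=; apply: contra ne.
  case: p1 p2 {e h1 h2} => a b [a' b'] /= /eqP [e1 e2].
  by apply/eqP; congr pair; apply/eqP; rewrite -subr_eq0 ?e1 ?e2.
have up : uvec (p1.1 - p2.1, p1.2 - p2.2) = uvec p1 - uvec p2.
  by rewrite /uvec vec3B /= mulrBr (TrB _ hpq).
rewrite submxE -/C -[C]mulmx_base mulmxA up mulmxBl mulmxBl.
by move: e => /eqP; rewrite /g => ->; rewrite subrr mul0mx.
Qed.

Definition SA : {set 'M[F]_3} := [set pt (uvec p) | p in Dset].

Lemma cardSA : th != 0 -> (#|SA| <= #|F| + q ^ h.-1 + 1)%N.
Proof.
move=> th0.
set Aff := [set pt (vec3 x (Tr (th * x)) 1) | x in [set: F]].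
set Inf := [set pt (vec3 x 1 0) | x in [set x : F | Tr (th * x) == 1]].
set E := [set pt (vec3 (1 : F) 0 0)].
have sub : SA \subset Aff :|: Inf :|: E.
  apply/subsetP => P /imsetP [[x c] pD ->]; move: pD; rewrite inE /= => /andP [Kc nz].
  rewrite !inE; case: (eqVneq c 0) => [c0|c0].
    case: (eqVneq (Tr (th * x)) 0) => [m0|m0].
      apply/orP; right; apply/eqP.
      have x0 : x != 0 by apply: contra nz => /eqP ->; rewrite c0.
      rewrite -(pt_scale (vec3 1 0 0) x0) vec3Z /uvec /= c0 m0 !mulr0 mulr1.
      done.
    apply/orP; left; apply/orP; right; apply/imsetP.
    have Km : Kp (Tr (th * x)) := Kp_Tr hq hpq hF hh _.
    exists (x / Tr (th * x)).
      rewrite inE mulrA -[th * x / _]mulrC (TrZ _ _ (KpV Km)) mulVf //.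
    rewrite -(pt_scale (vec3 (x / Tr (th * x)) 1 0) m0) vec3Z /uvec /= c0 mulr0 mulr1; congr (pt (vec3 _ _ _)).
    by field.
  apply/orP; left; apply/orP; left; apply/imsetP.
  exists (x / c); first by rewrite inE.
  rewrite -(pt_scale (vec3 (x / c) (Tr (th * (x / c))) 1) c0) vec3Z /uvec /= mulr1; congr (pt (vec3 _ _ _)).
    by field.
  rewrite mulrA -[th * x / c]mulrC (TrZ _ _ (KpV Kc)); field.
  done.
apply: leq_trans (subset_leq_card sub) _.
apply: leq_trans (leq_card_setU _ _).1 _; rewrite cards1 leq_add2r.
apply: leq_trans (leq_card_setU _ _).1 _; apply: leq_add.
  by apply: leq_trans (leq_imset_card _ _) _; rewrite cardsT.
apply: leq_trans (leq_imset_card _ _) _.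
have := Tr_fiber hq hh 1 th0; apply: leq_trans.
by apply: subset_leq_card; apply/subsetP => x; rewrite !inE.
Qed.

End Block.

Lemma cardsU_disj (T : finType) (A B : {set T}) :
  (forall x, x \in A -> x \in B -> False) -> #|A :|: B| = (#|A| + #|B|)%N.
Proof.
move=> d; rewrite cardsU.
have -> : A :&: B = set0.
  by apply/setP => x; rewrite !inE; apply/negP => /andP [a b]; apply: (d x).
by rewrite cards0 subn0.
Qed.

Lemma pad (T : finType) (S P : {set T}) (n : nat) :
  S \subset P -> (#|S| <= n)%N -> (n <= #|P|)%N ->
  exists S' : {set T}, [/\ S \subset S', S' \subset P & #|S'| = n].
Proof.
move=> sP hS hP.
have key : forall k (S0 : {set T}), S0 \subset P -> (#|S0| + k <= #|P|)%N ->
    exists S' : {set T}, [/\ S0 \subset S', S' \subset P & #|S'| = (#|S0| + k)%N].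
  elim=> [|k IH] S0 s0P hk.
    by exists S0; rewrite addn0 subxx.
  have : ~~ (P \subset S0).
    apply/negP => /subset_leq_card; move: hk; lia.
  case/subsetPn => x xP xS.
  have s1P : x |: S0 \subset P by rewrite subUset sub1set xP s0P.
  have c1 : #|x |: S0| = (#|S0| + 1)%N by rewrite cardsU1 xS addnC.
  have hk' : (#|x |: S0| + k <= #|P|)%N by rewrite c1; move: hk; lia.
  have [S' [a b c]] := IH (x |: S0) s1P hk'.
  exists S'; split => //.
    by apply: subset_trans a; apply: subsetUr.
  by rewrite c c1; lia.
have hk0 : (#|S| + (n - #|S|) <= #|P|)%N by lia.
have [S' [a b c]] := key (n - #|S|)%N S sP hk0.
by exists S'; split => //; rewrite c; lia.
Qed.

Section Points.
Variable (F : finFieldType).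

Lemma card_points : (#|F| * #|F| + #|F| + 1 <= #|[set P : 'M[F]_3 | pg_point P]|)%N.
Proof.
set Aff := [set pt (vec3 xy.1 xy.2 (1 : F)) | xy in [set: F * F]].
set Inf := [set pt (vec3 x (1 : F) 0) | x in [set: F]].
set E := [set pt (vec3 (1 : F) 0 0)].
have nz1 (a b : F) : vec3 a b 1 != 0 by rewrite vec3_eq0 oner_eq0 !andbF.
have nz2 (a : F) : vec3 a 1 0 != 0 by rewrite vec3_eq0 oner_eq0 andbF.
have nz3 : vec3 (1 : F) 0 0 != 0 by rewrite vec3_eq0 oner_eq0.
have cA : #|Aff| = (#|F| * #|F|)%N.
  rewrite card_in_imset ?cardsT ?card_prod // => [[a b] [a' b']] _ _ /= /ptP [l].
  rewrite vec3Z => /vec3_inj [e1 e2 e3].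
  have l1 : l = 1 by rewrite -[l]mulr1 -e3.
  by rewrite e1 e2 l1 !mul1r.
have cI : #|Inf| = #|F|.
  rewrite card_in_imset ?cardsT // => a a' _ _ /= /ptP [l].
  rewrite vec3Z => /vec3_inj [e1 e2 e3].
  have l1 : l = 1 by rewrite -[l]mulr1 -e2.
  by rewrite e1 l1 !mul1r.
have dAI : forall P, P \in Aff -> P \in Inf -> False.
  move=> P /imsetP [[a b] _ ->] /imsetP [x _] /ptP [l].
  by rewrite vec3Z => /vec3_inj [_ _]; rewrite mulr0 => /eqP; rewrite oner_eq0.
have dAE : forall P, P \in Aff :|: Inf -> P \in E -> False.
  move=> P; rewrite inE => /orP [/imsetP [[a b] _ ->]|/imsetP [x _ ->]]; rewrite inE => /eqP /ptP [l];
  rewrite vec3Z => /vec3_inj [_ ]; rewrite mulr0.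
    by move=> _ /eqP; rewrite oner_eq0.
  by move=> /eqP; rewrite oner_eq0.
have sub : Aff :|: Inf :|: E \subset [set P : 'M[F]_3 | pg_point P].
  apply/subsetP => P; rewrite !inE => /orP [/orP [/imsetP [[a b] _ ->]|/imsetP [x _ ->]]|/eqP ->];
  exact: pt_point.
apply: leq_trans (subset_leq_card sub).
by rewrite (cardsU_disj dAE) (cardsU_disj dAI) cA cI cards1.
Qed.

End Points.

Section Final.
Variables (F : finFieldType) (q h : nat).
Hypotheses (hq : (1 < q)%N) (hpq : [pchar F].-nat q) (hF : #|F| = (q ^ h)%N) (hh : (1 < h)%N).
Variables (th om al : F).
Local Notation Tr := (Tr q h).
Local Notation Kp := (Kp q).
Hypotheses (al0 : al != 0) (Kom : ~~ Kp om) (tau0 : Tr th != 0)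
  (s0 : Tr (th * om) = 0) (u0 : Tr (th * om * om) != 0)
  (halpha : forall k, Kp k -> k != 0 ->
     Tr (al / (k - om)) != (k - Tr (th * om * om)) / (k * Tr th)).

Local Notation M := (Mpsi th om al).
Local Notation uvec := (uvec q h th).
Local Notation Dset := (Dset F q).

Definition SB : {set 'M[F]_3} := [set <<P *m M>>%MS | P in SA q h th].
Definition SC : {set 'M[F]_3} := [set <<P *m M>>%MS | P in SB].

Lemma Mu : M \in unitmx. Proof. exact: (@Mpsi_unit F q h hq th om al al0 tau0). Qed.

Lemma memSA P : P \in SA q h th -> exists2 p, p \in Dset & P = pt (uvec p).
Proof. by case/imsetP => p pD ->; exists p. Qed.

Lemma memSB P : P \in SB -> exists2 p, p \in Dset & P = pt (uvec p *m M).
Proof. by case/imsetP => P0 /memSA [p pD ->] ->; exists p => //; rewrite ptM. Qed.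

Lemma memSC P : P \in SC -> exists2 p, p \in Dset & P = pt (uvec p *m M *m M).
Proof. by case/imsetP => P0 /memSB [p pD ->] ->; exists p => //; rewrite ptM. Qed.

Lemma inSA p : p \in Dset -> pt (uvec p) \in SA q h th.
Proof. by move=> pD; apply/imsetP; exists p. Qed.

Lemma inSB p : p \in Dset -> pt (uvec p *m M) \in SB.
Proof. by move=> pD; apply/imsetP; exists (pt (uvec p)); rewrite ?inSA ?ptM. Qed.

Lemma inSC p : p \in Dset -> pt (uvec p *m M *m M) \in SC.
Proof. by move=> pD; apply/imsetP; exists (pt (uvec p *m M)); rewrite ?inSB ?ptM. Qed.

Let cpt := core_pt hq hpq hF hh al0 Kom tau0 s0 u0 halpha.

Lemma dAB P : P \in SA q h th -> P \in SB -> False.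
Proof.
move=> /memSA [p pD ->] /memSB [p' p'D] e.
by have := cpt pD p'D; rewrite e eqxx.
Qed.

Lemma dBC P : P \in SB -> P \in SC -> False.
Proof.
move=> /memSB [p pD ->] /memSC [p' p'D] /esym /ptP [l e].
have e2 : uvec p' *m M = l *: uvec p.
  by rewrite -(mulmxK Mu (uvec p' *m M)) e -scalemxAl mulmxK // Mu.
have l0 : l != 0.
  apply: contra (uvecM_neq0 h th Mu p'D) => /eqP l0; by rewrite e2 l0 scale0r.
by have := cpt pD p'D; rewrite e2 (pt_scale _ l0) eqxx.
Qed.

Lemma dAC P : P \in SA q h th -> P \in SC -> False.
Proof.
move=> /memSA [p pD ->] /memSC [p' p'D] /esym /ptP [l e].
have e2 : (th / al) *: uvec p' = l *: (uvec p *m M).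
  by rewrite -(mulM3 th om al) e scalemxAl.
have rr : th / al != 0 by exact: (@r0 F q h hq th al al0 tau0).
have l0 : l != 0.
  apply/negP => /eqP l0; move: e2; rewrite l0 scale0r => /eqP.
  rewrite scaler_eq0 (negbTE rr) /= => /eqP ue.
  by move: (uvec_neq0 h th p'D); rewrite ue eqxx.
have e3 : uvec p' = (l / (th / al)) *: (uvec p *m M).
  by rewrite mulrC -scalerA -e2 scalerA mulVf // scale1r.
have := cpt p'D pD; rewrite e3 pt_scale ?eqxx //.
by rewrite mulf_neq0 // invr_eq0.
Qed.

End Final.

Lemma arith_aux (Q m : nat) : (2 * m <= Q)%N -> (4 <= Q)%N -> (4 * Q <= Q * Q)%N ->
  (3 * (Q + m + 1) <= Q * Q + Q + 1)%N.
Proof. move=> a b c; move: (Q * Q) c => QQ c; lia. Qed.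
Lemma arith_t (t n P : nat) : (t = 2 \/ t = 3) -> (3 * n <= P)%N -> (t * n <= P)%N.
Proof. by case=> ->; lia. Qed.
Lemma arith2 (a b n : nat) : (a <= n)%N -> (b <= a)%N -> (a + b <= 2 * n)%N.
Proof. lia. Qed.
Lemma arith3 (a b c n : nat) : (a <= n)%N -> (b <= a)%N -> (c <= b)%N -> (a + b + c <= 3 * n)%N.
Proof. lia. Qed.

Lemma main_aux (q h : nat) (F : finFieldType) :
  (1 < q)%N -> [pchar F].-nat q -> #|F| = (q ^ h)%N -> (1 < h)%N ->
  forall t : nat, (t = 2 \/ t = 3)%N ->
  exists B : {set 'M[F]_3},
    t_fold_blocking_set t B /\ #|B| = (t * (q ^ h + q ^ h.-1 + 1))%N.
Proof.
move=> hq hpq hF hh t ht.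
have [phi [phi0 trphi]] := exists_ker hq hpq hF hh.
have [om [t1 t2]] := exists_omega hq hpq hF hh phi0.
have om0 : om != 0.
  by apply: contra t1 => /eqP ->; rewrite mulr0 (Tr0 F h hq).
pose th := phi / om.
have Kom : ~~ Kp q om.
  apply: contra t1 => Kom; rewrite mulrC (TrZ _ _ Kom) trphi mulr0 //.
have tau0 : Tr q h th != 0 by [].
have s0 : Tr q h (th * om) = 0.
  have -> : th * om = phi by rewrite /th; field.
  done.
have u0 : Tr q h (th * om * om) != 0.
  have -> : th * om * om = phi * om by rewrite /th; field.
  done.
have [al [al0 halpha]] := exists_alpha hq hpq hF hh (Tr q h (th * om * om)) Kom tau0.
have th0 : th != 0 by apply: contra tau0 => /eqP ->; rewrite (Tr0 F h hq).
set SA' := SA q h th.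
set SB' := SB q h th om al.
set SC' := SC q h th om al.
have Mu' := Mu hq om al0 tau0.
set M := Mpsi th om al.
have MMu : M *m M \in unitmx by rewrite unitmx_mul Mu'.
have cA := cardSA hq hpq hF hh th0.
have cB : (#|SB'| <= #|SA'|)%N by apply: leq_imset_card.
have cC : (#|SC'| <= #|SB'|)%N by apply: leq_imset_card.
set Pts := [set P : 'M[F]_3 | pg_point P].
have cP := card_points F.
have ptA : SA' \subset Pts.
  apply/subsetP => P /memSA [p pD ->]; rewrite inE; apply: pt_point.
  exact: uvec_neq0.
have ptB : SB' \subset Pts.
  apply/subsetP => P /memSB [p pD ->]; rewrite inE; apply: pt_point.
  exact: uvecM_neq0.
have ptC : SC' \subset Pts.
  apply/subsetP => P /memSC [p pD ->]; rewrite inE; apply: pt_point.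
  rewrite -mulmxA; exact: uvecM_neq0.
have blA : forall L, pg_line L -> exists2 P, P \in SA' & pg_incident P L.
  move=> L hL; have [p pD hp] := block hq hpq hF hh th (unitmx1 F 3) hL.
  by exists (pt (uvec q h th p)); [apply/imsetP; exists p | rewrite pt_inc -(mulmx1 (uvec q h th p))].
have blB : forall L, pg_line L -> exists2 P, P \in SB' & pg_incident P L.
  move=> L hL; have [p pD hp] := block hq hpq hF hh th Mu' hL.
  by exists (pt (uvec q h th p *m M)); [apply: inSB | rewrite pt_inc].
have blC : forall L, pg_line L -> exists2 P, P \in SC' & pg_incident P L.
  move=> L hL; have [p pD hp] := block hq hpq hF hh th MMu hL.
  by exists (pt (uvec q h th p *m M *m M)); [apply: inSC | rewrite pt_inc -mulmxA].
have dAB' := dAB hq hpq hF hh al0 Kom tau0 s0 u0 halpha.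
have dBC' := dBC hq hpq hF hh al0 Kom tau0 s0 u0 halpha.
have dAC' := dAC hq hpq hF hh al0 Kom tau0 s0 u0 halpha.
set m := (q ^ h.-1)%N.
have hQ : (q ^ h = q * m)%N by rewrite /m -expnS prednK // ltnW.
have hm : (2 <= m)%N.
  have h1 : (1 <= h.-1)%N by rewrite -ltnS prednK // ltnW.
  have : (q ^ 1 <= q ^ h.-1)%N by rewrite leq_pexp2l // ltnW.
  by rewrite expn1; apply: leq_trans.
have arith : (3 * (q ^ h + m + 1) <= q ^ h * q ^ h + q ^ h + 1)%N.
  have h2m : (2 * m <= q ^ h)%N by rewrite hQ leq_mul2r hq orbT.
  have hQ4 : (4 <= q ^ h)%N by rewrite hQ; apply: leq_trans (leq_mul hq hm).
  have hQQ : (4 * q ^ h <= q ^ h * q ^ h)%N by rewrite leq_mul2r hQ4 orbT.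
  exact: arith_aux.
rewrite hF in cA cP.
have cA' : (#|SA'| <= q ^ h + m + 1)%N by [].
have gen : forall S0 : {set 'M[F]_3}, S0 \subset Pts -> (#|S0| <= t * (q ^ h + m + 1))%N ->
    (forall L, pg_line L -> (t <= #|[set P in S0 | pg_incident P L]|)%N) ->
    exists B : {set 'M[F]_3}, t_fold_blocking_set t B /\ #|B| = (t * (q ^ h + m + 1))%N.
  move=> S0 sub c0 bl.
  have ht3 : (t * (q ^ h + m + 1) <= #|Pts|)%N.
    by apply: leq_trans cP; apply: arith_t.
  have [S' [s1 s2 s3]] := pad sub c0 ht3.
  exists S'; split => //; split.
    by move=> P /(subsetP s2); rewrite inE.
  move=> L hL; apply: leq_trans (bl L hL) _; apply: subset_leq_card.
  by apply/subsetP => P; rewrite !inE => /andP [/(subsetP s1) -> ->].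
case: (ht) => et.
  apply: (gen (SA' :|: SB')).
  - by rewrite subUset ptA ptB.
  - rewrite et; apply: leq_trans (leq_card_setU _ _).1 _; exact: arith2.
  move=> L hL; have [PA a ia] := blA L hL; have [PB b ib] := blB L hL.
  have ne : PA != PB by apply/eqP => e; apply: (dAB' PA) => //; rewrite e.
  have : [set PA; PB] \subset [set P in SA' :|: SB' | pg_incident P L].
    by apply/subsetP => P; rewrite !inE => /orP [/eqP ->|/eqP ->]; rewrite ?a ?b ?ia ?ib ?orbT.
  by move/subset_leq_card; rewrite cards2 ne et.
apply: (gen (SA' :|: SB' :|: SC')).
- by rewrite !subUset ptA ptB ptC.
- rewrite et; apply: leq_trans (leq_card_setU _ _).1 _.
  apply: leq_trans (leq_add (leq_card_setU _ _).1 (leqnn _)) _.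
  by apply: arith3 => //; apply: leq_trans cC cB.
move=> L hL; have [PA a ia] := blA L hL; have [PB b ib] := blB L hL; have [PC c ic] := blC L hL.
have ne1 : PA != PB by apply/eqP => e; apply: (dAB' PA) => //; rewrite e.
have ne2 : PB != PC by apply/eqP => e; apply: (dBC' PB) => //; rewrite e.
have ne3 : PA != PC by apply/eqP => e; apply: (dAC' PA) => //; rewrite e.
have : [set PA; PB; PC] \subset [set P in SA' :|: SB' :|: SC' | pg_incident P L].
  apply/subsetP => P; rewrite !inE => /orP [/orP [/eqP ->|/eqP ->]|/eqP ->];
  by rewrite ?a ?b ?c ?ia ?ib ?ic ?orbT.
move/subset_leq_card; rewrite -setUA cardsU1 cards2 ne2 !inE negb_or ne1 ne3 et.
done.
Qed.

Local Close Scope ring_scope.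


Theorem theorem1p3 (q h : nat) (F : finFieldType) :
  prime_power q -> (2 <= h)%N -> #|F| = (q ^ h)%N ->
  forall t : nat, (t = 2 \/ t = 3)%N ->
  exists B : {set 'M[F]_3},
    t_fold_blocking_set t B /\
    #|B| = (t * (q ^ h + q ^ (h - 1) + 1))%N.
Proof.
move=> [p [k [pp [k0 eq]]]] hh hF t ht.
have hq : (1 < q)%N.
  rewrite eq; apply: leq_trans (prime_gt1 pp) _.
  by rewrite -{1}(expn1 p) leq_pexp2l // prime_gt0.
have hp : (p \in [pchar F]%R).
  by apply: (@card_finPcharP F p (k * h)%N) => //; rewrite hF eq expnM.
have hpq : ([pchar F]%R).-nat q.
  by rewrite eq pnatX (eq_pnat _ (GRing.pcharf_eq hp)) pnat_id.
rewrite subn1; exact: main_aux.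
Qed.
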